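(* Let $P$ be a finite subset of $\mathbb{S}^n$ without antipodal pairs and let $a\in\mathbb{R}$. If the function $x\mapsto d_{\mathbb{S}^n}(x,P)+a$ belongs to $\mathbf{E}(\mathbb{S}^n)$, then $a=\frac12\mathrm{diam}(P)$ and $P$ is pointwise extremal.
   Context: $\mathbb{S}^n$ is the unit $n$-sphere with geodesic metric $d_{\mathbb{S}^n}$; $d_{\mathbb{S}^n}(x,P)=\min_{p\in P}d_{\mathbb{S}^n}(x,p)$. For a metric space $X$, $\Delta(X)=\{f:X\to\mathbb{R}\text{ bounded}:f(x)+f(x')\ge d_X(x,x')\}$ and the tight span $\mathbf{E}(X)$ is the set of pointwise-minimal elements of $\Delta(X)$. For $p\in P$, $\mathrm{comax}_P(p)=\{p'\in P:d_{\mathbb{S}^n}(p,p')=\mathrm{diam}(P)\}$. A point $p\in P$ is held by $P$ if for every tangent vector $v\in T_p\mathbb{S}^n$ there is $p'\in\mathrm{comax}_P(p)$ with $\langle v,\exp_p^{-1}(p')\rangle\ge0$, where $\exp_p^{-1}(p')$ is the unit tangent vector at $p$ of the shortest geodesic from $p$ to $p'$. $P$ is pointwise extremal if every point of $P$ is held by $P$. *)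

(* Defs.v *)
From HB Require Import structures.
From mathcomp Require Import all_boot all_order all_algebra.
From mathcomp Require Import reals trigo.
Set Implicit Arguments. Unset Strict Implicit. Unset Printing Implicit Defensive.
Import Order.TTheory GRing.Theory Num.Theory.
Local Open Scope ring_scope.

Section Sphere.
Variables (R : realType) (n : nat).
Notation V := 'rV[R]_(n.+1).

Definition dot (u v : V) : R := \sum_(i < n.+1) u ord0 i * v ord0 i.

Definition on_sphere (x : V) : Prop := dot x x = 1.

Definition dS (x y : V) : R := acos (dot x y).

Definition distP (P : seq V) (x : V) : R :=
  \big[Num.min/dS x (head 0 P)]_(p <- P) dS x p.

Definition diamP (P : seq V) : R :=
  \big[Num.max/0]_(p <- P) \big[Num.max/0]_(q <- P) dS p q.

Definition in_comax (P : seq V) (p p' : V) : Prop :=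
  p' \in P /\ dS p p' = diamP P.

Definition tangent (p v : V) : Prop := dot v p = 0.

(* exp_p^{-1}(p'): unit tangent vector at p of the shortest geodesic from p
   to p' (normalized projection of p' onto the tangent space at p). *)
Definition exp_inv (p p' : V) : V :=
  let w := p' - dot p p' *: p in (Num.sqrt (dot w w))^-1 *: w.

Definition held (P : seq V) (p : V) : Prop :=
  forall v, tangent p v ->
    exists p', in_comax P p p' /\ 0 <= dot v (exp_inv p p').

Definition pointwise_extremal (P : seq V) : Prop :=
  forall p, p \in P -> held P p.

Definition no_antipodal (P : seq V) : Prop :=
  forall p, p \in P -> - p \notin P.

Definition Delta_S (f : V -> R) : Prop :=
  (exists M : R, forall x, on_sphere x -> `|f x| <= M) /\
  (forall x x', on_sphere x -> on_sphere x' -> dS x x' <= f x + f x').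

(* Tight span E(S^n): pointwise-minimal elements of Delta(S^n)
   (functions compared on S^n only). *)
Definition tight_span_S (f : V -> R) : Prop :=
  Delta_S f /\
  (forall g, Delta_S g -> (forall x, on_sphere x -> g x <= f x) ->
     forall x, on_sphere x -> g x = f x).

End Sphere.

(* Main.v *)
Require Import Defs.
From HB Require Import structures.
From mathcomp Require Import all_boot all_order all_algebra.
From mathcomp Require Import reals trigo.
From mathcomp Require Import ring lra.
Import Order.TTheory GRing.Theory Num.Theory.
Local Open Scope ring_scope.
Set Implicit Arguments. Unset Strict Implicit.

Section S.
Variables (R : realType) (n : nat).
Notation V := 'rV[R]_(n.+1).
Implicit Types u v w x y z : V.

Lemma dotC u v : dot u v = dot v u.
Proof. by apply: eq_bigr => i _; rewrite mulrC. Qed.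
Lemma dotDl u v w : dot (u + v) w = dot u w + dot v w.
Proof. by rewrite /dot -big_split; apply: eq_bigr => i _; rewrite mxE mulrDl. Qed.
Lemma dotZl (k : R) u w : dot (k *: u) w = k * dot u w.
Proof. by rewrite /dot mulr_sumr; apply: eq_bigr => i _; rewrite mxE mulrA. Qed.
Lemma dotNl u w : dot (- u) w = - dot u w.
Proof. by rewrite -scaleN1r dotZl mulN1r. Qed.
Lemma dotBl u v w : dot (u - v) w = dot u w - dot v w.
Proof. by rewrite dotDl dotNl. Qed.
Lemma dotDr u v w : dot w (u + v) = dot w u + dot w v.
Proof. by rewrite dotC dotDl !(dotC w). Qed.
Lemma dotZr (k : R) u w : dot w (k *: u) = k * dot w u.
Proof. by rewrite dotC dotZl dotC. Qed.
Lemma dotNr u w : dot w (- u) = - dot w u.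
Proof. by rewrite dotC dotNl dotC. Qed.
Lemma dotBr u v w : dot w (u - v) = dot w u - dot w v.
Proof. by rewrite dotDr dotNr. Qed.
Lemma dot0l u : dot 0 u = 0.
Proof. by rewrite -(scale0r 0) dotZl mul0r. Qed.
Lemma dot_ge0 u : 0 <= dot u u.
Proof. by apply: sumr_ge0 => i _; rewrite -expr2 sqr_ge0. Qed.
Lemma dot_eq0 u : dot u u = 0 -> u = 0.
Proof.
move=> /eqP; rewrite psumr_eq0; last by move=> i _; rewrite -expr2 sqr_ge0.
move=> /allP H; apply/matrixP => i j; rewrite (ord1 i) mxE.
by have := H j (mem_index_enum j); rewrite mulf_eq0 orbb => /eqP.
Qed.

Lemma dot_CS u w :
  - (Num.sqrt (dot u u) * Num.sqrt (dot w w)) <= dot u w.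
Proof.
set a := Num.sqrt (dot u u); set b := Num.sqrt (dot w w).
have Ha : a ^+ 2 = dot u u by rewrite sqr_sqrtr ?dot_ge0.
have Hb : b ^+ 2 = dot w w by rewrite sqr_sqrtr ?dot_ge0.
have a0 : 0 <= a by apply: sqrtr_ge0.
have b0 : 0 <= b by apply: sqrtr_ge0.
have [a0e|an0] := eqVneq a 0.
  have -> : u = 0 by apply: dot_eq0; rewrite -Ha a0e expr0n.
  by rewrite dot0l a0e mul0r oppr0.
have [b0e|bn0] := eqVneq b 0.
  have -> : w = 0 by apply: dot_eq0; rewrite -Hb b0e expr0n.
  by rewrite dotC dot0l b0e mulr0 oppr0.
have ap : 0 < a by rewrite lt_def an0.
have bp : 0 < b by rewrite lt_def bn0.
have := dot_ge0 (b *: u + a *: w).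
rewrite !(dotDl, dotDr, dotZl, dotZr) (dotC w u) -Ha -Hb => H.
have abp : 0 < a * b by apply: mulr_gt0.
nra.
Qed.

Lemma dot_bounds x y : on_sphere x -> on_sphere y -> -1 <= dot x y <= 1.
Proof.
rewrite /on_sphere => hx hy.
have h1 := dot_CS x y; have h2 := dot_CS x (- y).
rewrite dotNl dotNr opprK hx hy sqrtr1 mulr1 in h1 h2.
rewrite dotNr in h2.
by apply/andP; split; lra.
Qed.

Lemma cos_le_mono (s t : R) : 0 <= s -> t <= pi -> s <= t -> cos t <= cos s.
Proof.
move=> s0 tpi st; rewrite le_eqVlt in st; case/orP: st => [/eqP -> //|st].
apply: ltW; rewrite ltr_cos // in_itv /=; apply/andP; split => //; lra.
Qed.

Lemma acos_le (z s : R) : -1 <= z <= 1 -> 0 <= s <= pi -> cos s <= z -> acos z <= s.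
Proof.
move=> hz /andP[s0 spi] h; rewrite leNgt; apply/negP => lt.
have hs : s \in `[0, pi] by rewrite in_itv /= s0 spi.
have ha : acos z \in `[0, pi] by rewrite in_itv /= acos_ge0 // acos_lepi.
have H0 : (cos (acos z) < cos s) = (s < acos z) := ltr_cos hs ha.
rewrite lt acosK ?in_itv // in H0. lra.
Qed.

Lemma dS_ge0 x y : on_sphere x -> on_sphere y -> 0 <= dS x y.
Proof. by move=> hx hy; apply: acos_ge0; apply: dot_bounds. Qed.
Lemma dS_lepi x y : on_sphere x -> on_sphere y -> dS x y <= pi.
Proof. by move=> hx hy; apply: acos_lepi; apply: dot_bounds. Qed.
Lemma dS_sym x y : dS x y = dS y x.
Proof. by rewrite /dS dotC. Qed.
Lemma dS_refl x : on_sphere x -> dS x x = 0.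
Proof. by rewrite /dS /on_sphere => ->; rewrite acos1. Qed.
Lemma cos_dS x y : on_sphere x -> on_sphere y -> cos (dS x y) = dot x y.
Proof. by move=> hx hy; rewrite /dS acosK // in_itv /= dot_bounds. Qed.

Lemma dS_triangle x y z : on_sphere x -> on_sphere y -> on_sphere z ->
  dS x z <= dS x y + dS y z.
Proof.
move=> hx hy hz.
have a0 := dS_ge0 hx hy; have b0 := dS_ge0 hy hz.
have [big|small] := leP pi (dS x y + dS y z).
  by apply: le_trans big; apply: dS_lepi.
apply: acos_le; first exact: dot_bounds.
  by apply/andP; split; [lra|apply: ltW].
rewrite cosD.
have sa : sin (dS x y) = Num.sqrt (1 - dot x y ^+ 2) by apply: sin_acos; apply: dot_bounds.
have sb : sin (dS y z) = Num.sqrt (1 - dot y z ^+ 2) by apply: sin_acos; apply: dot_bounds.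
rewrite sa sb !cos_dS //.
set ca := dot x y; set cb := dot y z.
have := dot_CS (x - ca *: y) (z - cb *: y).
have hyy : dot y y = 1 by [].
rewrite !(dotBl, dotBr, dotZl, dotZr) hx hz hyy (dotC y x) (dotC z y) -/ca -/cb.
have -> : 1 - ca * ca - ca * (ca - ca * 1) = 1 - ca ^+ 2 by ring.
have -> : 1 - cb * cb - cb * (cb - cb * 1) = 1 - cb ^+ 2 by ring.
have -> : dot x z - cb * ca - ca * (cb - cb * 1) = dot x z - ca * cb by ring.
move=> H; lra.
Qed.

Section Big.
Variable T : eqType.
Implicit Types (s : seq T) (F : T -> R) (d : R).

Lemma bigmin_le s F d q : q \in s -> \big[Num.min/d]_(p <- s) F p <= F q.
Proof.
elim: s => [//|x s IH]; rewrite in_cons big_cons => /orP[/eqP->|qs].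
  by rewrite ge_min lexx.
by rewrite ge_min IH // orbT.
Qed.
Lemma bigmin_le_d s F d : \big[Num.min/d]_(p <- s) F p <= d.
Proof. by elim: s => [|x s IH]; rewrite ?big_nil // big_cons ge_min IH orbT. Qed.
Lemma bigmin_cases s F d : (\big[Num.min/d]_(p <- s) F p = d) \/
  exists2 q, q \in s & \big[Num.min/d]_(p <- s) F p = F q.
Proof.
elim: s => [|x s IH]; first by left; rewrite big_nil.
rewrite big_cons; case: (leP (F x) (\big[Num.min/d]_(p <- s) F p)) => h.
  by right; exists x; rewrite ?mem_head.
case: IH => [->|[q qs ->]]; first by left.
by right; exists q; rewrite // in_cons qs orbT.
Qed.
Lemma bigmax_ge s F d q : q \in s -> F q <= \big[Num.max/d]_(p <- s) F p.
Proof.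
elim: s => [//|x s IH]; rewrite in_cons big_cons => /orP[/eqP->|qs].
  by rewrite le_max lexx.
by rewrite le_max IH // orbT.
Qed.
Lemma bigmax_ge_d s F d : d <= \big[Num.max/d]_(p <- s) F p.
Proof. by elim: s => [|x s IH]; rewrite ?big_nil // big_cons le_max IH orbT. Qed.
Lemma bigmax_le s F d m : d <= m -> (forall q, q \in s -> F q <= m) ->
  \big[Num.max/d]_(p <- s) F p <= m.
Proof.
move=> dm; elim: s => [|x s IH] H; first by rewrite big_nil.
rewrite big_cons ge_max H ?mem_head //=; apply: IH => q qs.
by apply: H; rewrite in_cons qs orbT.
Qed.
Lemma argmax s F : s != [::] -> exists2 q, q \in s & forall r, r \in s -> F r <= F q.
Proof.
elim: s => [//|x s IH] _; case: (eqVneq s [::]) => [->|sn].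
  by exists x; rewrite ?mem_head // => r; rewrite in_cons in_nil orbF => /eqP->.
have [q qs Hq] := IH sn.
case: (leP (F q) (F x)) => h.
  exists x; first exact: mem_head.
  move=> r; rewrite in_cons => /orP[/eqP->//|rs]; exact: le_trans (Hq r rs) h.
exists q; first by rewrite in_cons qs orbT.
move=> r; rewrite in_cons => /orP[/eqP->|rs]; [exact: ltW|exact: Hq].
Qed.
End Big.

Implicit Types P : seq V.

Lemma distP_le P x q : q \in P -> distP P x <= dS x q.
Proof. exact: bigmin_le. Qed.
Lemma distP_att P x : P != [::] -> exists2 q, q \in P & distP P x = dS x q.
Proof.
case: P => [//|p0 P] _; rewrite /distP.
case: (bigmin_cases (p0 :: P) (dS x) (dS x (head 0 (p0 :: P)))) => [->|[q qs ->]]; last by exists q.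
by exists p0; rewrite ?mem_head.
Qed.
Lemma distP_self P p : (forall q, q \in P -> on_sphere q) -> p \in P -> distP P p = 0.
Proof.
move=> HP pP; apply/eqP; rewrite eq_le; apply/andP; split.
  by rewrite -(dS_refl (HP p pP)); apply: distP_le.
have Pn : P != [::] by case: (P) pP.
have [q qP ->] := distP_att p Pn.
exact: dS_ge0 (HP p pP) (HP q qP).
Qed.

Lemma key P a x0 M : P != [::] -> (forall p, p \in P -> on_sphere p) ->
  tight_span_S (fun x => distP P x + a) -> on_sphere x0 ->
  (forall q, q \in P -> dS x0 q <= M) -> distP P x0 + a <= Num.max 0 (M - a).
Proof.
move=> Pn HP [[[B HB] HD] Hmin] hx0 HM.
have f0 : 0 <= distP P x0 + a.
  by have := HD x0 x0 hx0 hx0; rewrite dS_refl //; lra.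
set m := Num.max 0 (M - a).
have m0 : 0 <= m by rewrite le_max lexx.
have mM : M - a <= m by rewrite le_max lexx orbT.
have Hm : forall y, on_sphere y -> dS x0 y <= m + (distP P y + a).
  move=> y hy; have [q qP ->] := distP_att y Pn.
  have := dS_triangle hx0 (HP q qP) hy; have := HM q qP.
  rewrite (dS_sym q y); lra.
set c := Num.min (distP P x0 + a) m.
have hc : c = distP P x0 + a \/ c = m by rewrite /c; case: leP; [left|right].
have c0 : 0 <= c by rewrite /c le_min f0 m0.
have cf : c <= distP P x0 + a by rewrite /c ge_min lexx.
have cm : c <= m by rewrite /c ge_min lexx orbT.
clearbody c.
have Hc : forall y, on_sphere y -> dS x0 y <= c + (distP P y + a).
  by move=> y hy; case: hc => ->; [apply: HD|apply: Hm].
pose g := fun x => if x == x0 then c else distP P x + a.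
have Dg : Delta_S g.
  split.
    exists B => x hx; rewrite /g; case: eqP => [_|_]; last exact: HB.
    apply: le_trans (HB x0 hx0); rewrite ger0_norm //.
    by apply: le_trans cf (ler_norm _).
  move=> x x' hx hx'; rewrite /g.
  case: eqP => [->|_]; case: eqP => [->|_].
  - by rewrite dS_refl //; lra.
  - exact: Hc.
  - by rewrite dS_sym addrC; apply: Hc.
  - exact: HD.
have Hle : forall x, on_sphere x -> g x <= distP P x + a.
  by move=> x hx; rewrite /g; case: eqP => [->|_].
have := Hmin g Dg Hle x0 hx0; rewrite /g eqxx => hce.
by rewrite -hce.
Qed.

Lemma dS_pos x y : on_sphere x -> on_sphere y -> x != y -> 0 < dS x y.
Proof.
move=> hx hy nxy; rewrite lt_def dS_ge0 // andbT; apply/eqP => h0.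
have h1 : dot x y = 1 by rewrite -cos_dS // h0 cos0.
have : dot (x - y) (x - y) = 0.
  rewrite !(dotBl, dotBr) hx hy (dotC y x) h1; ring.
by move=> /dot_eq0 /eqP; rewrite subr_eq0 (negbTE nxy).
Qed.

Lemma diam_ge P p q : p \in P -> q \in P -> dS p q <= diamP P.
Proof.
move=> pP qP; apply: le_trans (bigmax_ge (fun p => \big[Num.max/0]_(q <- P) dS p q) 0 pP).
exact: bigmax_ge.
Qed.
Lemma diam_ge0 P : 0 <= diamP P.
Proof. exact: bigmax_ge_d. Qed.
Lemma diam_le P m : 0 <= m -> (forall p q, p \in P -> q \in P -> dS p q <= m) ->
  diamP P <= m.
Proof.
move=> m0 H; apply: bigmax_le => // p pP; apply: bigmax_le => // q qP; exact: H.
Qed.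

Lemma main_lemma (P : seq V) (a : R) :
  P != [::] ->
  (forall p, p \in P -> on_sphere p) ->
  no_antipodal P ->
  tight_span_S (fun x => distP P x + a) ->
  a = diamP P / 2 /\ pointwise_extremal P.
Proof.
move=> Pn HP _ HT.
have HT' := HT; case: HT' => [[_ HD] _].
set D := diamP P.
have [p0 p0P] : exists p0, p0 \in P by case: (P) Pn => // p0 P' _; exists p0; rewrite mem_head.
have hp0 := HP p0 p0P.
have a0 : 0 <= a.
  have := HD p0 p0 hp0 hp0; rewrite dS_refl ?distP_self // => h. lra.
have D2a : D <= a + a.
  apply: diam_le => [|p q pP qP]; first lra.
  by have := HD p q (HP p pP) (HP q qP); rewrite !distP_self // !add0r.
have D0 : 0 <= D := diam_ge0 P.
have aD : a = D / 2.
  have HM : forall q, q \in P -> dS p0 q <= D by move=> q qP; apply: diam_ge.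
  have := key Pn HP HT (HP p0 p0P) HM; rewrite distP_self // add0r.
  rewrite le_max => /orP[h|h]; lra.
split => // p pP v hv.
have hp := HP p pP.
have [q qP Hq] := argmax (dS p) Pn.
have [v0|vn0] := eqVneq v 0.
  exists q; split; last by rewrite v0 dot0l.
  split => //; apply/eqP; rewrite eq_le diam_ge //=.
  have HM : forall r, r \in P -> dS p r <= dS p q by [].
  have := dS_ge0 hp (HP q qP); have := key Pn HP HT hp HM.
  rewrite distP_self // add0r => h0 h1; move: h0.
  rewrite le_max => /orP[h|h]; rewrite -/D; lra.
have vv0 : 0 < dot v v.
  rewrite lt_def dot_ge0 andbT; apply/eqP => /dot_eq0 h; by rewrite h eqxx in vn0.
set s := Num.sqrt (dot v v).
have s0 : 0 < s by rewrite /s sqrtr_gt0.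
have s2 : s ^+ 2 = dot v v by rewrite /s sqr_sqrtr // ltW.
set u := s^-1 *: v.
have hu : on_sphere u.
  rewrite /on_sphere /u dotZl dotZr -s2; field; lra.
have up : dot u p = 0 by rewrite /u dotZl hv mulr0.
have uw : forall w, dot u w = s^-1 * dot v w by move=> w; rewrite /u dotZl.
clearbody u.
set delta := \big[Num.min/1]_(q <- [seq q <- P | q != p]) dS p q.
have d1 : delta <= 1 by apply: bigmin_le_d.
have dpos : 0 < delta.
  rewrite /delta; case: (bigmin_cases [seq q <- P | q != p] (dS p) 1) => [->|[r]]; first lra.
  rewrite mem_filter => /andP[rp rP] ->; apply: dS_pos => //; [exact: HP|].
  by rewrite eq_sym.
have dle : forall r, r \in P -> r != p -> delta <= dS p r.
  by move=> r rP rp; apply: bigmin_le; rewrite mem_filter rp rP.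
set t := delta / 2.
have pi2 := @pi_ge2 R.
have t0 : 0 < t by rewrite /t; lra.
have tpi : t < pi by rewrite /t; lra.
have st0 : 0 < sin t by apply: sin_gt0_pi; rewrite t0 tpi.
have cs := cos2Dsin2 t.
set x0 := cos t *: p - sin t *: u.
have hpp : dot p p = 1 by [].
have huu : dot u u = 1 by [].
have hx0 : on_sphere x0.
  rewrite /on_sphere /x0 !(dotBl, dotBr, dotZl, dotZr) hpp huu up (dotC p u) up.
  rewrite !expr2 in cs; lra.
have x0p : dS x0 p = t.
  rewrite /dS /x0 !(dotBl, dotZl) hpp up mulr1 mulr0 subr0.
  by rewrite cosK // in_itv /= ltW // ltW.
have dx0 : t <= distP P x0.
  have [r rP ->] := distP_att x0 Pn.
  have [->|rp] := eqVneq r p; first by rewrite x0p.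
  have := dS_triangle hp hx0 (HP r rP); have := dle r rP rp.
  rewrite (dS_sym p x0) x0p /t; lra.
have [q' q'P Hq'] := argmax (dS x0) Pn.
have := key Pn HP HT hx0 Hq'; rewrite le_max => /orP[h|h]; first lra.
have hq' := HP q' q'P.
have tri := dS_triangle hx0 hp hq'; rewrite x0p in tri.
have pq'D : dS p q' = D.
  apply/eqP; rewrite eq_le diam_ge //=; lra.
exists q'; split; first by split.
rewrite /exp_inv dotZr; apply: mulr_ge0; first by rewrite invr_ge0 sqrtr_ge0.
rewrite dotBr dotZr (dotC v p) (dotC p v) hv mulr0 subr0.
have Dpi : D <= pi by rewrite -pq'D; apply: dS_lepi.
have sD : 0 <= sin D by apply: sin_ge0_pi; rewrite D0 Dpi.
have hpi : t + D <= pi by apply: le_trans (dS_lepi hx0 hq'); lra.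
have := cos_le_mono (s := t + D) (t := dS x0 q'); rewrite cos_dS // cosD.
have -> : dot x0 q' = cos t * cos D - sin t * (s^-1 * dot v q').
  by rewrite /x0 !(dotBl, dotZl) uw -pq'D cos_dS.
move=> H; have {H} H : sin t * sin D <= sin t * (s^-1 * dot v q').
  have : 0 <= t + D by lra.
  move=> h1; have h3 : t + D <= dS x0 q' by lra.
  have := H h1 (dS_lepi hx0 hq') h3; lra.
have : sin D <= s^-1 * dot v q' by rewrite -(ler_pM2l st0).
have si : 0 < s^-1 by rewrite invr_gt0.
move=> h2; have : 0 <= s^-1 * dot v q' by lra.
by rewrite pmulr_rge0.
Qed.
End S.

Unset Implicit Arguments.
Set Strict Implicit.

Theorem proposition4p8 (R : realType) (n : nat) (P : seq 'rV[R]_(n.+1)) (a : R) :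
  P != [::] ->
  (forall p, p \in P -> on_sphere p) ->
  no_antipodal P ->
  tight_span_S (fun x => distP P x + a) ->
  a = diamP P / 2 /\ pointwise_extremal P.
Proof. exact: main_lemma. Qed.
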